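(* $\mathrm{rk}(|\Phi^3\rangle)=7$, where $|\Phi^3\rangle=|\Phi\rangle_{AB}|\Phi\rangle_{AC}|\Phi\rangle_{BC}$ with $|\Phi\rangle=|00\rangle+|11\rangle$, viewed as a tripartite tensor in $(\mathbb{C}^2\otimes\mathbb{C}^2)_A\otimes(\mathbb{C}^2\otimes\mathbb{C}^2)_B\otimes(\mathbb{C}^2\otimes\mathbb{C}^2)_C$ (party $A$ holds one qubit of the $AB$ pair and one of the $AC$ pair, and similarly for $B$ and $C$).
   Context: The tensor rank $\mathrm{rk}(|\phi\rangle)$ of $|\phi\rangle\in H_A\otimes H_B\otimes H_C$ is the minimum $r$ such that $|\phi\rangle=\sum_{j=1}^r|a_j\rangle|b_j\rangle|c_j\rangle$ with $|a_j\rangle\in H_A,|b_j\rangle\in H_B,|c_j\rangle\in H_C$. *)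

(* Defs.v *)
From mathcomp Require Import all_boot all_algebra.
From mathcomp Require Import Rstruct complex.
Set Implicit Arguments.
Unset Strict Implicit.
Unset Printing Implicit Defensive.
Import GRing.Theory.
Local Open Scope ring_scope.

Definition C : numClosedFieldType := (Rdefinitions.R)[i].

Definition tensor3 (F : Type) (IA IB IC : finType) := IA -> IB -> IC -> F.

Definition has_decomp (F : fieldType) (IA IB IC : finType)
    (T : tensor3 F IA IB IC) (r : nat) : Prop :=
  exists (a : 'I_r -> IA -> F) (b : 'I_r -> IB -> F) (c : 'I_r -> IC -> F),
    forall x y z, T x y z = \sum_(j < r) a j x * b j y * c j z.

Definition tensor_rank_is (F : fieldType) (IA IB IC : finType)
    (T : tensor3 F IA IB IC) (r : nat) : Prop :=
  has_decomp T r /\ (forall r', has_decomp T r' -> (r <= r')%N).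

(* A = (A1, A2) with A1 paired with B, A2 paired with C;
   B = (B1, B2) with B1 paired with A, B2 paired with C;
   C = (C1, C2) with C1 paired with A, C2 paired with B. *)
Definition qq := ('I_2 * 'I_2)%type.

Definition Phi (u v : 'I_2) : C := if u == v then 1 else 0.

Definition Phi3 : tensor3 C qq qq qq :=
  fun a b c => Phi a.1 b.1 * Phi a.2 c.1 * Phi b.2 c.2.

(* Main.v *)
Require Import Defs.
From mathcomp Require Import all_boot all_algebra.
From mathcomp Require Import Rstruct complex.
From mathcomp Require Import ring zify.
Import GRing.Theory.
Local Open Scope ring_scope.

Record m2 := M2 { e00 : C; e01 : C; e10 : C; e11 : C }.
Definition mmul (X Y : m2) : m2 :=
  M2 (e00 X * e00 Y + e01 X * e10 Y) (e00 X * e01 Y + e01 X * e11 Y)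
     (e10 X * e00 Y + e11 X * e10 Y) (e10 X * e01 Y + e11 X * e11 Y).
Definition mtr (X : m2) : C := e00 X + e11 X.
Definition pr (G X : m2) : C := mtr (mmul G X).
Definition tr3 (X Y Z : m2) : C := mtr (mmul (mmul X Y) Z).
Definition madj (X : m2) : m2 := M2 (e11 X) (- e01 X) (- e10 X) (e00 X).
Definition m0 : m2 := M2 0 0 0 0.

Lemma m2_eq0 (X : m2) : e00 X = 0 -> e01 X = 0 -> e10 X = 0 -> e11 X = 0 -> X = m0.
Proof. by case: X => /= ? ? ? ? -> -> -> ->. Qed.

Lemma sq0 (x : C) : x * x = 0 -> x = 0.
Proof. by move/eqP; rewrite mulf_eq0 orbb => /eqP. Qed.

Lemma M2core (A B Z : m2) (p q : m2 -> C) :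
  (forall X Y, pr A X = 0 -> pr B Y = 0 -> tr3 X Y Z = p X * q Y) ->
  pr (madj (mmul B A)) Z = 0.
Proof.
case: A B Z => [a00 a01 a10 a11] [b00 b01 b10 b11] [z00 z01 z10 z11] H.
pose X0 := M2 a01 0 (- a00) 0.
pose X1 := M2 0 a11 0 (- a10).
pose Xc := M2 a11 a01 (- a10) (- a00).
pose Y0 := M2 b10 (- b00) 0 0.
pose Y1 := M2 0 0 b11 (- b01).
pose Yc := M2 b11 (- b01) b10 (- b00).
pose A := M2 a00 a01 a10 a11. pose B := M2 b00 b01 b10 b11. pose Z := M2 z00 z01 z10 z11.
have hX0 : pr A X0 = 0 by rewrite /pr /mtr /=; ring.
have hX1 : pr A X1 = 0 by rewrite /pr /mtr /=; ring.
have hXc : pr A Xc = 0 by rewrite /pr /mtr /=; ring.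
have hY0 : pr B Y0 = 0 by rewrite /pr /mtr /=; ring.
have hY1 : pr B Y1 = 0 by rewrite /pr /mtr /=; ring.
have hYc : pr B Yc = 0 by rewrite /pr /mtr /=; ring.
have minor : forall X X' Y Y', pr A X = 0 -> pr A X' = 0 -> pr B Y = 0 -> pr B Y' = 0 ->
   tr3 X Y Z * tr3 X' Y' Z = tr3 X Y' Z * tr3 X' Y Z.
  move=> X X' Y Y' h1 h2 h3 h4; rewrite !H //; ring.
have m2 := minor _ _ _ _ hX0 hXc hY1 hYc.
have m3 := minor _ _ _ _ hX1 hXc hY0 hYc.
have m4 := minor _ _ _ _ hX0 hXc hY0 hYc.
have m5 := minor _ _ _ _ hX1 hXc hY1 hYc.
pose nu (u0 u1 w0 w1 : C) := u0*(z00*w0 + z01*w1) + u1*(z10*w0 + z11*w1).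
pose n00 := nu b10 (- b00) a01 (- a00).
pose n11 := nu b11 (- b01) a11 (- a10).
pose n01 := nu b10 (- b00) a11 (- a10).
pose n10 := nu b11 (- b01) a01 (- a00).
have t01 : tr3 X0 Y1 Z = 0 by rewrite /tr3 /mtr /=; ring.
have t10 : tr3 X1 Y0 Z = 0 by rewrite /tr3 /mtr /=; ring.
have t00 : tr3 X0 Y0 Z = n00 by rewrite /tr3 /mtr /n00 /nu /=; ring.
have t11 : tr3 X1 Y1 Z = n11 by rewrite /tr3 /mtr /n11 /nu /=; ring.
have t0c : tr3 X0 Yc Z = n10 by rewrite /tr3 /mtr /n10 /nu /=; ring.
have t1c : tr3 X1 Yc Z = n01 by rewrite /tr3 /mtr /n01 /nu /=; ring.
have tc0 : tr3 Xc Y0 Z = n01 by rewrite /tr3 /mtr /n01 /nu /=; ring.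
have tc1 : tr3 Xc Y1 Z = n10 by rewrite /tr3 /mtr /n10 /nu /=; ring.
have tcc : tr3 Xc Yc Z = n00 + n11 by rewrite /tr3 /mtr /n00 /n11 /nu /=; ring.
have lam : pr (madj (mmul B A)) Z = n00 + n11 by rewrite /pr /mtr /n00 /n11 /nu /=; ring.
rewrite t01 t0c tc1 tcc mul0r in m2.
rewrite t10 t1c tc0 tcc mul0r in m3.
rewrite t00 t0c tc0 tcc in m4.
rewrite t11 t1c tc1 tcc in m5.
have h10 : n10 = 0 by apply: sq0; rewrite -m2.
have h01 : n01 = 0 by apply: sq0; rewrite -m3.
rewrite lam; apply: sq0.
have -> : (n00 + n11) * (n00 + n11) = n00 * (n00 + n11) + n11 * (n00 + n11) by ring.
by rewrite m4 m5 h10 h01 !mul0r addr0.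
Qed.
Lemma lin2 (c0 c1 d0 d1 : C) :
  (forall p0 p1, (c0 * p0 + c1 * p1) * (d0 * p0 + d1 * p1) = 0) ->
  (c0 = 0 /\ c1 = 0) \/ (d0 = 0 /\ d1 = 0).
Proof.
move=> H.
have h1 := H 1 0; have h2 := H 0 1; have h3 := H 1 1.
rewrite !mulr1 !mulr0 !addr0 !add0r in h1 h2 h3.
have [c0z|c0n] := eqVneq c0 0.
  have [c1z|c1n] := eqVneq c1 0; first by left.
  right; move/eqP: h2; rewrite mulf_eq0 (negbTE c1n) /= => /eqP d1z.
  rewrite c0z d1z in h3 *; split => //.
  by move/eqP: h3; rewrite add0r addr0 mulf_eq0 (negbTE c1n) => /eqP.
right; move/eqP: h1; rewrite mulf_eq0 (negbTE c0n) /= => /eqP d0z.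
split => //.
have : c0 * d1 = 0.
  have -> : c0 * d1 = (c0 + c1) * (d0 + d1) - c1 * d1 - c0 * d0 - c1 * d0 by ring.
  by rewrite h3 h2 d0z !mulr0 !subr0.
by move/eqP; rewrite mulf_eq0 (negbTE c0n) => /eqP.
Qed.

Lemma cols (M N : m2) :
  (forall g0 g1, (g0 * e00 M + g1 * e10 M = 0 /\ g0 * e01 M + g1 * e11 M = 0) \/
                 (g0 * e00 N + g1 * e10 N = 0 /\ g0 * e01 N + g1 * e11 N = 0)) ->
  M = m0 \/ N = m0.
Proof.
case: M N => [m00 m01 m10 m11] [n00 n01 n10 n11] /= H.
have F : forall c0 c1 d0 d1 : C,
   (forall g0 g1, (g0 * c0 + g1 * c1 = 0) \/ (g0 * d0 + g1 * d1 = 0)) ->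
   (c0 = 0 /\ c1 = 0) \/ (d0 = 0 /\ d1 = 0).
  move=> c0 c1 d0 d1 G; apply: lin2 => p0 p1.
  case: (G p0 p1) => E.
    by rewrite (mulrC c0) (mulrC c1) E mul0r.
  by rewrite (mulrC d0) (mulrC d1) E mulr0.
have F00 : (m00 = 0 /\ m10 = 0) \/ (n00 = 0 /\ n10 = 0).
  by apply: F => g0 g1; case: (H g0 g1) => [[? ?]|[? ?]]; [left|right].
have F01 : (m00 = 0 /\ m10 = 0) \/ (n01 = 0 /\ n11 = 0).
  by apply: F => g0 g1; case: (H g0 g1) => [[? ?]|[? ?]]; [left|right].
have F10 : (m01 = 0 /\ m11 = 0) \/ (n00 = 0 /\ n10 = 0).
  by apply: F => g0 g1; case: (H g0 g1) => [[? ?]|[? ?]]; [left|right].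
have F11 : (m01 = 0 /\ m11 = 0) \/ (n01 = 0 /\ n11 = 0).
  by apply: F => g0 g1; case: (H g0 g1) => [[? ?]|[? ?]]; [left|right].
case: F00 => [[? ?]|[? ?]]; case: F01 => [[? ?]|[? ?]];
  case: F10 => [[? ?]|[? ?]]; case: F11 => [[? ?]|[? ?]]; subst;
  first [by left | by right].
Qed.

Definition bl (M : m2) (g0 g1 p0 p1 : C) :=
  g0 * (e00 M * p0 + e01 M * p1) + g1 * (e10 M * p0 + e11 M * p1).

Lemma bil2 (M Z : m2) :
  (forall g0 g1 p0 p1, bl M g0 g1 p0 p1 * bl Z g0 g1 p0 p1 = 0) -> M = m0 \/ Z = m0.
Proof.
move=> H; apply: cols => g0 g1.
have := lin2 (g0 * e00 M + g1 * e10 M) (g0 * e01 M + g1 * e11 M)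
             (g0 * e00 Z + g1 * e10 Z) (g0 * e01 Z + g1 * e11 Z).
apply=> p0 p1; rewrite -(H g0 g1 p0 p1) /bl; ring.
Qed.

Lemma M1core (A B Z : m2) : mmul B A <> m0 ->
  (forall X Y, pr A X = 0 -> pr B Y = 0 -> tr3 X Y Z = 0) -> Z = m0.
Proof.
move=> nBA H.
suff : mmul B A = m0 \/ Z = m0 by case.
apply: bil2 => g0 g1 p0 p1.
case: A B Z H {nBA} => [a00 a01 a10 a11] [b00 b01 b10 b11] [z00 z01 z10 z11] H.
pose v0 := a00 * p0 + a01 * p1. pose v1 := a10 * p0 + a11 * p1.
pose X := M2 (p0 * v1) (p0 * - v0) (p1 * v1) (p1 * - v0).
pose w0 := b00 * g0 + b10 * g1. pose w1 := b01 * g0 + b11 * g1.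
pose Y := M2 (w1 * g0) (w1 * g1) (- w0 * g0) (- w0 * g1).
have hX : pr (M2 a00 a01 a10 a11) X = 0 by rewrite /pr /mtr /X /v0 /v1 /=; ring.
have hY : pr (M2 b00 b01 b10 b11) Y = 0 by rewrite /pr /mtr /Y /w0 /w1 /=; ring.
rewrite -(H X Y hX hY) /tr3 /mtr /bl /X /Y /v0 /v1 /w0 /w1 /=; ring.
Qed.
Definition cz (Z : m2) (t : 'I_4) : C :=
  match val t with 0 => e00 Z | 1 => e01 Z | 2 => e10 Z | _ => e11 Z end.
Definition cf (G : m2) (t : 'I_4) : C :=
  match val t with 0 => e00 G | 1 => e10 G | 2 => e01 G | _ => e11 G end.
Definition vec (Z : m2) : 'rV[C]_4 := \row_t cz Z t.
Definition colv (G : m2) : 'cV[C]_4 := \col_t cf G t.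
Definition unvec (v : 'rV[C]_4) : m2 :=
  M2 (v 0 (inord 0)) (v 0 (inord 1)) (v 0 (inord 2)) (v 0 (inord 3)).

Lemma sum4 (F : 'I_4 -> C) : \sum_(t < 4) F t =
  F (inord 0) + F (inord 1) + F (inord 2) + F (inord 3).
Proof.
rewrite !big_ord_recl big_ord0 addr0 !addrA.
congr (_ + _ + _ + _); congr F; apply/val_inj; by rewrite /= inordK.
Qed.

Lemma pr_mx (G Z : m2) : (vec Z *m colv G) 0 0 = pr G Z.
Proof.
rewrite mxE sum4 !mxE /cz /cf /pr /mtr /= !inordK //.
case: G Z => [? ? ? ?] [? ? ? ?] /=; ring.
Qed.

Lemma vecK (v : 'rV[C]_4) : vec (unvec v) = v.
Proof.
apply/rowP => t; rewrite mxE /cz /unvec.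
case: t => [[|[|[|[|t]]]] Ht] //=; congr (v _ _); apply/val_inj; by rewrite /= inordK.
Qed.

Lemma LA (G : 'M[C]_4) (l : 'cV[C]_4) :
  (forall v : 'rV_4, v *m G = 0 -> v = 0) ->
  (forall (k : 'I_4) (v : 'rV_4), (forall j, j != k -> (v *m G) 0 j = 0) -> v *m l = 0) ->
  l = 0.
Proof.
move=> Hinj H.
have Gu : G \in unitmx by rewrite -row_free_unit; apply: inj_row_free.
have E : invmx G *m l = 0.
  apply/row_matrixP => k; rewrite row0 rowE mulmxA; apply: (H k).
  move=> j jk; rewrite mulmxKV // mxE eqxx /=.
  by rewrite (negbTE jk).
by rewrite -(mulKVmx Gu l) E mulmx0.
Qed.
Lemma LemM (A B : m2) (al be ga : 'I_4 -> m2) : mmul B A <> m0 ->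
  (forall X Y Z, pr A X = 0 -> pr B Y = 0 ->
     tr3 X Y Z = \sum_(k < 4) pr (al k) X * pr (be k) Y * pr (ga k) Z) -> False.
Proof.
move=> nBA H.
pose G := \matrix_(t, k) cf (ga k) t.
have GE : forall Z k, (vec Z *m G) 0 k = pr (ga k) Z.
  move=> Z k; rewrite -pr_mx !mxE; apply: eq_bigr => t _; by rewrite !mxE.
have l0 := @LA G (colv (madj (mmul B A))).
have : colv (madj (mmul B A)) = 0.
  apply: l0.
    move=> v Hv; set Z := unvec v.
    have Z0 : Z = m0.
      apply: (@M1core A B Z nBA) => X Y hX hY; rewrite H //; apply: big1 => k _.
      have -> : pr (ga k) Z = 0 by rewrite -GE vecK Hv mxE.
      by rewrite mulr0.
    by rewrite -(vecK v) -/Z Z0; apply/rowP => t; rewrite !mxE /cz; case: (val t) => [|[|[|]]].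
  move=> k v Hv; set Z := unvec v.
  have Hz : forall j, j != k -> pr (ga j) Z = 0.
    by move=> j jk; rewrite -GE vecK Hv.
  have E : pr (madj (mmul B A)) Z = 0.
    apply: (@M2core A B Z (fun X => pr (al k) X * pr (ga k) Z) (pr (be k))).
    move=> X Y hX hY; rewrite H // (bigD1 k) //= big1 ?addr0.
      by rewrite mulrAC.
    by move=> j jk; rewrite Hz // mulr0.
  have : (vec Z *m colv (madj (mmul B A))) 0 0 = 0 by rewrite pr_mx.
  rewrite /Z vecK => E2.
  by apply/matrixP => i j; rewrite !ord1 E2 mxE.
move: nBA; move: (mmul B A) => M nM E; apply: nM.
have e t : cf (madj M) t = 0.
  by have := congr1 (fun m : 'cV[C]_4 => m t 0) E; rewrite !mxE.
have e0 := e (inord 0); have e1 := e (inord 1); have e2 := e (inord 2); have e3 := e (inord 3).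
rewrite /cf /= !inordK // in e0 e1 e2 e3.
case: M {E e} e0 e1 e2 e3 => ? ? ? ? /= h0 h1 h2 h3.
apply: m2_eq0 => //=.
- by rewrite -[LHS]opprK h2 oppr0.
- by rewrite -[LHS]opprK h1 oppr0.
Qed.
From Stdlib Require Import Classical.

Lemma reidx (T : finType) (P : pred T) (x0 : T) (F : T -> C) : (#|P| <= 4)%N ->
  \sum_(k | P k) F k = \sum_(t < 4) (if (t < #|P|)%N then F (nth x0 (enum P) t) else 0).
Proof.
move=> h; rewrite (eq_bigl (fun k => k \in P)) // -big_enum (big_nth x0) big_mkord.
rewrite -cardE (big_ord_widen 4 (fun t => F (nth x0 (enum P) t)) h) big_mkcond.
by apply: eq_bigr => t _; rewrite /=.
Qed.

Definition E00 := M2 1 0 0 0.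

Lemma L0 (X : m2) : (forall Y Z, tr3 X Y Z = 0) -> X = m0.
Proof.
move=> H.
have h1 := H (M2 1 0 0 0) (M2 1 0 0 0).
have h2 := H (M2 0 0 1 0) (M2 1 0 0 0).
have h3 := H (M2 1 0 0 0) (M2 0 1 0 0).
have h4 := H (M2 0 0 1 0) (M2 0 1 0 0).
move: h1 h2 h3 h4; clear H; case: X => x00 x01 x10 x11; rewrite /tr3 /mtr /= => h1 h2 h3 h4.
apply: m2_eq0 => /=.
- by rewrite -h1; ring.
- by rewrite -h2; ring.
- by rewrite -h3; ring.
- by rewrite -h4; ring.
Qed.

Lemma pr0 X : pr m0 X = 0.
Proof. rewrite /pr /mtr /=; ring. Qed.

Lemma prC (A X : m2) : pr A X = pr X A.
Proof. case: A X => ? ? ? ? [? ? ? ?]; rewrite /pr /mtr /=; ring. Qed.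

Lemma LB (r : nat) (A B Cc : 'I_r -> m2) :
  (forall X Y Z, tr3 X Y Z = \sum_(j < r) pr (A j) X * pr (B j) Y * pr (Cc j) Z) -> (7 <= r)%N.
Proof.
move=> D.
have hz : forall X, (forall j, pr (A j) X = 0) -> X = m0.
  move=> X HX; apply: L0 => Y Z; rewrite D big1 // => j _; by rewrite HX !mul0r.
have [i Bi] : exists i, B i <> m0.
  apply: NNPP => N.
  have := D E00 E00 E00; rewrite big1; last first.
    move=> j _; have -> : B j = m0 by apply: NNPP => Bj; apply: N; exists j.
    by rewrite pr0 mulr0 mul0r.
  have -> : tr3 E00 E00 E00 = 1 by rewrite /tr3 /mtr /=; ring.
  by move/eqP; rewrite oner_eq0.
have [i' [j [ij nBA]]] : exists i j, i != j /\ mmul (B i) (A j) <> m0.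
  apply: NNPP => N.
  have H : forall i j, i != j -> mmul (B i) (A j) = m0.
    move=> i0 j0 ij; apply: NNPP => nz; apply: N; by exists i0, j0.
  have [Mz|Mn] := classic (mmul (B i) (A i) = m0).
    apply: Bi; apply: hz => j.
    have [->|ji] := eqVneq j i.
      by rewrite prC /pr Mz /mtr /= addr0.
    by rewrite prC /pr H 1?eq_sym // /mtr /= addr0.
  have : mmul (B i) (A i) = m0 \/ B i = m0.
    apply: cols => q0 q1.
    pose M := mmul (B i) (A i).
    pose v0 := q0 * e00 M + q1 * e10 M. pose v1 := q0 * e01 M + q1 * e11 M.
    pose w0 := q0 * e00 (B i) + q1 * e10 (B i). pose w1 := q0 * e01 (B i) + q1 * e11 (B i).
    pose X := M2 (v1 * w0) (v1 * w1) (- v0 * w0) (- v0 * w1).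
    have X0 : X = m0.
      apply: hz => j.
      have [->|ji] := eqVneq j i.
        rewrite /X /v0 /v1 /w0 /w1 /M.
        case: (A i) (B i) => ? ? ? ? [? ? ? ?]; rewrite /pr /mtr /=; ring.
      have -> : pr (A j) X = mtr (mmul (mmul (B i) (A j)) (M2 (v1 * q0) (v1 * q1) (- v0 * q0) (- v0 * q1))).
        rewrite /X /w0 /w1.
        case: (A j) (B i) => ? ? ? ? [? ? ? ?]; rewrite /pr /mtr /=; ring.
      by rewrite H 1?eq_sym // /mtr /=; ring.
    have := congr1 e00 X0; have := congr1 e01 X0; have := congr1 e10 X0; have := congr1 e11 X0.
    rewrite /X /= => h11 h10 h01 h00.
    have [w0z|w0n] := eqVneq w0 0.
      have [w1z|w1n] := eqVneq w1 0; first by right.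
      left; split.
        by move/eqP: h11; rewrite mulNr oppr_eq0 mulf_eq0 (negbTE w1n) orbF => /eqP.
      by move/eqP: h01; rewrite mulf_eq0 (negbTE w1n) orbF => /eqP.
    left; split.
      by move/eqP: h10; rewrite mulNr oppr_eq0 mulf_eq0 (negbTE w0n) orbF => /eqP.
    by move/eqP: h00; rewrite mulf_eq0 (negbTE w0n) orbF => /eqP.
  by case.
rewrite leqNgt; apply/negP => r7.
pose P := [pred k | (k != i') && (k != j)].
have cP : (#|P| <= 4)%N.
  have := cardD1 i' 'I_r; rewrite card_ord inE => c1.
  have := cardD1 j [predD1 'I_r & i']; rewrite !inE eq_sym ij /= => c2.
  have -> : #|P| = #|[predD1 [predD1 'I_r & i'] & j]|.
    by apply: eq_card => k; rewrite !inE andbT andbC.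
  rewrite c2 in c1; rewrite c1 in r7; move: r7; set n := #|_|; rewrite /=; lia.
pose s := enum P.
pose al (t : 'I_4) := if (t < #|P|)%N then A (nth i' s t) else m0.
pose be (t : 'I_4) := if (t < #|P|)%N then B (nth i' s t) else m0.
pose ga (t : 'I_4) := if (t < #|P|)%N then Cc (nth i' s t) else m0.
apply: (@LemM (A j) (B i') al be ga nBA) => X Y Z hX hY.
rewrite D (bigD1 i') //= (bigD1 j) //=; last by rewrite eq_sym.
rewrite hY hX !mulr0 !mul0r !add0r.
have R := @reidx _ P i' (fun k => pr (A k) X * pr (B k) Y * pr (Cc k) Z) cP.
rewrite [LHS](_ : _ = \sum_(k | P k) pr (A k) X * pr (B k) Y * pr (Cc k) Z) //.
rewrite R.
apply: eq_bigr => t _; rewrite /al /be /ga.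
by case: ifP => _; rewrite ?pr0 ?mul0r.
Qed.
Definition ua (m i j : nat) : C := match m, i, j with
 | 0,0,0 => 1 | 0,1,1 => 1
 | 1,1,0 => 1 | 1,1,1 => 1
 | 2,0,0 => 1
 | 3,1,1 => 1
 | 4,0,0 => 1 | 4,0,1 => 1
 | 5,1,0 => 1 | 5,0,0 => -1
 | 6,0,1 => 1 | 6,1,1 => -1
 | _,_,_ => 0 end.
Definition vb (m j k : nat) : C := match m, j, k with
 | 0,0,0 => 1 | 0,1,1 => 1
 | 1,0,0 => 1
 | 2,0,1 => 1 | 2,1,1 => -1
 | 3,1,0 => 1 | 3,0,0 => -1
 | 4,1,1 => 1
 | 5,0,0 => 1 | 5,0,1 => 1
 | 6,1,0 => 1 | 6,1,1 => 1
 | _,_,_ => 0 end.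
Definition wc (m i k : nat) : C := match m, i, k with
 | 0,0,0 => 1 | 0,1,1 => 1
 | 1,1,0 => 1 | 1,1,1 => -1
 | 2,0,1 => 1 | 2,1,1 => 1
 | 3,0,0 => 1 | 3,1,0 => 1
 | 4,0,0 => -1 | 4,0,1 => 1
 | 5,1,1 => 1
 | 6,0,0 => 1
 | _,_,_ => 0 end.

Lemma upper : has_decomp Phi3 7.
Proof.
exists (fun (m : 'I_7) (x : qq) => ua m x.2 x.1), (fun (m : 'I_7) (y : qq) => vb m y.1 y.2), (fun (m : 'I_7) (z : qq) => wc m z.1 z.2).
move=> [x1 x2] [y1 y2] [z1 z2].
rewrite !big_ord_recl big_ord0 /=.
rewrite /Phi3 /Phi /=.
case: x1 => [[|[|?]] ?] //; case: x2 => [[|[|?]] ?] //;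
case: y1 => [[|[|?]] ?] //; case: y2 => [[|[|?]] ?] //;
case: z1 => [[|[|?]] ?] //; case: z2 => [[|[|?]] ?] //=; ring.
Qed.
Definition o0 : 'I_2 := ord0.
Definition o1 : 'I_2 := lift ord0 (ord0 : 'I_1).

Lemma sumqq (F : qq -> C) : \sum_(x : qq) F x = F (o0, o0) + F (o0, o1) + F (o1, o0) + F (o1, o1).
Proof.
rewrite (eq_bigr (fun p : qq => F (p.1, p.2))); last by case.
rewrite -(pair_bigA _ (fun i j => F (i, j))) /=.
by rewrite !big_ord_recl !big_ord0 !addr0 addrA.
Qed.

Definition ent (X : m2) (i j : 'I_2) : C :=
  match val i, val j with 0, 0 => e00 X | 0, _ => e01 X | _, 0 => e10 X | _, _ => e11 X end.
Definition Xh (X : m2) (x : qq) : C := ent X x.2 x.1.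
Definition Yh (X : m2) (x : qq) : C := ent X x.1 x.2.
Definition Zh (X : m2) (x : qq) : C := ent X x.2 x.1.

Lemma tr3E (X Y Z : m2) :
  \sum_(x : qq) \sum_(y : qq) \sum_(z : qq) Phi3 x y z * Xh X x * Yh Y y * Zh Z z = tr3 X Y Z.
Proof.
rewrite !sumqq /Phi3 /Phi /Xh /Yh /Zh /ent /tr3 /mtr /=.
case: X Y Z => ? ? ? ? [? ? ? ?] [? ? ? ?] /=; ring.
Qed.

Lemma lower r : has_decomp Phi3 r -> (7 <= r)%N.
Proof.
move=> [a [b [c H]]].
pose A j := M2 (a j (o0,o0)) (a j (o0,o1)) (a j (o1,o0)) (a j (o1,o1)).
pose B j := M2 (b j (o0,o0)) (b j (o1,o0)) (b j (o0,o1)) (b j (o1,o1)).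
pose Cc j := M2 (c j (o0,o0)) (c j (o0,o1)) (c j (o1,o0)) (c j (o1,o1)).
apply: (@LB r A B Cc) => X Y Z.
rewrite -tr3E.
have E : forall j, pr (A j) X * pr (B j) Y * pr (Cc j) Z =
   \sum_(x : qq) \sum_(y : qq) \sum_(z : qq) (a j x * b j y * c j z) * (Xh X x * Yh Y y * Zh Z z).
  move=> j; rewrite !sumqq /A /B /Cc /Xh /Yh /Zh /ent /pr /mtr /=.
  case: X Y Z => ? ? ? ? [? ? ? ?] [? ? ? ?] /=; ring.
rewrite (eq_bigr _ (fun j _ => E j)).
rewrite [RHS]exchange_big; apply: eq_bigr => x _.
rewrite [RHS]exchange_big; apply: eq_bigr => y _.
rewrite [RHS]exchange_big; apply: eq_bigr => z _.
by rewrite H -mulr_suml !mulrA.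
Qed.

Theorem lemma1 : tensor_rank_is Phi3 7.
Proof. split; [exact: upper | exact: lower]. Qed.
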